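(* Let $n\ge 96$ and let $\mathcal{H}$ be an $n$-vertex Berge-$K_4$-saturated $3$-graph with the minimum number of hyperedges. Let $X=\{v\in V(\mathcal{H}): d_{\mathcal{H}}(v)\ge 3\}$, $A=\{v\in V(\mathcal{H})\setminus X: \text{every hyperedge containing } v \text{ intersects } X\}$ and $B=V(\mathcal{H})\setminus(X\cup A)$. Then $B=\emptyset$.
   Context: A $3$-graph has all hyperedges of size $3$. A $3$-graph contains a Berge-$K_4$ if there are $4$ distinct vertices and $6$ distinct hyperedges, one containing each of the $6$ pairs of these vertices. $\mathcal{H}$ is Berge-$K_4$-saturated if it contains no Berge-$K_4$ but adding any $3$-set of vertices not already a hyperedge creates a Berge-$K_4$. ''Minimum number of hyperedges'' means minimum among all Berge-$K_4$-saturated $3$-graphs on $n$ vertices. $d_{\mathcal{H}}(v)$ is the number of hyperedges containing $v$. *)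

(* Defs.v *)
From mathcomp Require Import all_boot.
Set Implicit Arguments. Unset Strict Implicit. Unset Printing Implicit Defensive.

Section Hyper.
Variable T : finType.

Definition three_graph (H : {set {set T}}) : Prop :=
  forall e, e \in H -> #|e| = 3.

Definition pairs_of (S : {set T}) : {set {set T}} :=
  [set p : {set T} | (p \subset S) && (#|p| == 2)].

(* H contains a Berge-K4: 4 distinct vertices (a 4-set S) and 6 distinct
   hyperedges f p, one containing each pair p of S *)
Definition has_berge_K4 (H : {set {set T}}) : Prop :=
  exists S : {set T}, #|S| = 4 /\
    exists f : {set T} -> {set T},
      {in pairs_of S &, injective f} /\
      (forall p, p \in pairs_of S -> p \subset f p /\ f p \in H).

Definition berge_K4_saturated (H : {set {set T}}) : Prop :=
  ~ has_berge_K4 H /\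
  forall e : {set T}, #|e| = 3 -> e \notin H -> has_berge_K4 (e |: H).

Definition deg (H : {set {set T}}) (v : T) : nat := #|[set e in H | v \in e]|.

Definition Xset (H : {set {set T}}) : {set T} := [set v | 3 <= deg H v].

Definition Aset (H : {set {set T}}) : {set T} :=
  [set v | (v \notin Xset H) &&
           [forall e in H, (v \in e) ==> [exists x in Xset H, x \in e]]].

Definition Bset (H : {set {set T}}) : {set T} := ~: (Xset H :|: Aset H).

End Hyper.

(* Main.v *)
Require Import Defs.
From mathcomp Require Import all_boot.

Lemma key (T : finType) (H : {set {set T}}) (a b c x : T) :
  ~ has_berge_K4 H ->
  [set a; b; c] \in H -> a != b -> c != a -> c != b -> x != c ->
  deg H a <= 2 -> deg H b <= 2 -> deg H c <= 2 ->
  [set a; b; x] \notin H ->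
  ~ has_berge_K4 ([set a; b; x] |: H).
Proof.
move=> noK eH ab ca cb xc da db dc nH [S [S4 [f [finj fP]]]].
set e := [set a; b; c] in eH *; set e' := [set a; b; x] in nH *.
set E := e' |: H.
have [p0 p0S fp0] : exists2 p0, p0 \in pairs_of S & f p0 = e'.
  case: (boolP [exists p in pairs_of S, f p == e']) => [/exists_inP [p pS /eqP fp]|/exists_inP nf].
    by exists p.
  exfalso; apply: noK; exists S; split=> //; exists f; split=> // p pS.
  have [sub fin] := fP p pS; split=> //; move: fin; rewrite in_setU1 => /orP[/eqP fpe|//].
  by exfalso; apply: nf; exists p => //; apply/eqP.
pose P v := [set p in pairs_of S | v \in p].
have Pcard : forall v, v \in S -> 3 <= #|f @: P v|.
  move=> v vS; rewrite card_in_imset; last first.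
    by move=> p q; rewrite !inE => /andP[pS _] /andP[qS _]; apply: finj; rewrite ?inE.
  have c3 : #|[set [set v; s] | s in S :\ v]| = 3.
    rewrite card_in_imset.
      by move: S4; rewrite (cardsD1 v S) vS => [[]].
    move=> s1 s2; rewrite !in_setD1 => /andP[s1v _] /andP[s2v _] E12.
    have: s1 \in [set v; s2] by rewrite -E12 set22.
    by rewrite in_set2 (negbTE s1v) /= => /eqP.
  rewrite -c3; apply: subset_leq_card; apply/subsetP => p /imsetP [s sS ->].
  move: sS; rewrite in_setD1 => /andP[sv sS].
  by rewrite !inE eqxx andbT subUset !sub1set vS sS /= cards2 (eq_sym v) sv.
have Esub : forall v, v \in S -> f @: P v \subset [set g in E | v \in g].
  move=> v vS; apply/subsetP => g /imsetP [p pP ->]; move/setIdP: pP => [pS vp].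
  have [sub fin] := fP p pS; rewrite inE fin /=.
  by apply: (subsetP sub).
have degE : forall v, #|[set g in E | v \in g]| <= 1 + deg H v.
  move=> v; apply: (leq_trans (subset_leq_card (_ : _ \subset e' |: [set g in H | v \in g]))).
    apply/subsetP => g; rewrite !inE => /andP[/orP[->|gH] vg] //.
    by rewrite gH vg orbT.
  by rewrite cardsU1; case: (_ \notin _).

have degE' : forall v, v \notin e' -> #|[set g in E | v \in g]| <= deg H v.
  move=> v ve; apply: subset_leq_card; apply/subsetP => g; rewrite !inE => /andP[/orP[/eqP ge|gH] vg].
    by move: ve; rewrite -ge vg.
  by rewrite gH.
have cS : c \notin S.
  apply/negP => cS.
  have ce : c \notin e' by rewrite !inE !negb_or ca cb eq_sym xc.
  have := leq_trans (Pcard c cS) (leq_trans (subset_leq_card (Esub c cS)) (degE' c ce)).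
  by move=> /(leq_trans)-/(_ _ dc).
have cover : forall v, v \in S -> deg H v <= 2 -> forall g, g \in E -> v \in g ->
    exists2 p, p \in P v & f p = g.
  move=> v vS dv g gE vg.
  have eqv : f @: P v = [set g in E | v \in g].
    apply/eqP; rewrite eqEcard Esub //=.
    exact: leq_trans (degE v) (leq_trans _ (Pcard v vS)).
  have : g \in f @: P v by rewrite eqv inE gE.
  by case/imsetP => p pP ->; exists p.
have eE : e \in E by rewrite /E in_setU1 eH orbT.
have step4 : forall v, v \in S -> v \in [set a; b] -> [set a; b] \subset S /\ f [set a; b] = e.
  move=> v vS vab.
  have dv : deg H v <= 2 by move: vab; rewrite in_set2 => /orP[]/eqP->.
  have ve : v \in e by move: vab; rewrite !inE => /orP[]->; rewrite ?orbT.
  have [p pP fpe] := cover v vS dv e eE ve.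
  move: pP; rewrite !inE => /andP[/andP[pS /eqP p2] vp].
  have pS' : p \in pairs_of S by rewrite inE pS p2 eqxx.
  have [sub _] := fP p pS'.
  have pab : p \subset [set a; b].
    apply/subsetP => y yp; have := subsetP sub y yp; rewrite fpe !inE -orbA => /or3P[->|->|/eqP yc]; rewrite ?orbT //.
    by move: cS; rewrite -yc (subsetP pS y yp).
  have pe : p = [set a; b].
    by apply/eqP; rewrite eqEcard pab cards2 ab p2.
  by rewrite -pe fpe.
have [aS bS fab] : [/\ a \in S, b \in S & f [set a; b] = e].
  have [sub _] := fP p0 p0S.
  move: p0S; rewrite inE => /andP[pS /eqP p2].
  have : exists2 v, v \in p0 & v \in [set a; b].
    case: (boolP [exists v in p0, v \in [set a; b]]) => [/exists_inP[v ??]|/exists_inPn nv].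
      by exists v.
    exfalso.
    have : p0 \subset [set x].
      apply/subsetP => y yp; have := subsetP sub y yp; rewrite fp0 !inE -orbA => /or3P[/eqP ya|/eqP yb|//].
        by have := nv y yp; rewrite ya !inE eqxx.
      by have := nv y yp; rewrite yb !inE eqxx orbT.
    by move/subset_leq_card; rewrite cards1 p2.
  case=> v vp vab; have vS := subsetP pS v vp.
  have [sab ->] := step4 v vS vab.
  by split=> //; apply: (subsetP sab); rewrite !inE eqxx ?orbT.
have e'E : e' \in E by rewrite /E setU11.
have ae' : a \in e' by rewrite !inE eqxx.
have be' : b \in e' by rewrite !inE eqxx orbT.
have [q1 q1P fq1] := cover a aS da e' e'E ae'.
have [q2 q2P fq2] := cover b bS db e' e'E be'.
move/setIdP: (q1P) => [q1S aq1]; move/setIdP: (q2P) => [q2S bq2].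
have q12 : q1 = q2 by apply: finj => //; rewrite fq1 fq2.
move: q1S; rewrite inE => /andP[_ /eqP q2c].
have qab : q1 = [set a; b].
  apply/eqP; rewrite eq_sym eqEcard cards2 ab q2c andbT.
  by rewrite subUset !sub1set aq1 q12 bq2.
by move: nH; rewrite -fq1 qab fab eH.
Qed.

Theorem lemma3p4 (n : nat) (H : {set {set 'I_n}}) :
  96 <= n ->
  three_graph H ->
  berge_K4_saturated H ->
  (forall H' : {set {set 'I_n}},
      three_graph H' -> berge_K4_saturated H' -> #|H| <= #|H'|) ->
  Bset H = set0.
Proof.
move=> n96 H3 [noK sat] _.
apply/setP => v; rewrite in_set0; apply/negbTE/negP => vB.
move: vB; rewrite /Bset inE in_setU negb_or => /andP[vX vA].
move: vA; rewrite /Aset inE vX /= => /forall_inPn [e eH].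
rewrite negb_imply => /andP[ve /exists_inPn nX].
have dlow : forall u, u \in e -> deg H u <= 2.
  move=> u ue; rewrite leqNgt; apply/negP => h.
  by have := nX u; rewrite /Xset inE ue => /(_ h).
have e3 := H3 e eH.
have : #|e :\ v| == 2 by move: (e3); rewrite (cardsD1 v e) ve add1n => -[->].
case/cards2P => b [c [bc ebc]].
have be : b \in e :\ v by rewrite ebc set21.
have ce : c \in e :\ v by rewrite ebc set22.
move: (be) (ce); rewrite !in_setD1 => /andP[bv be'] /andP[cv ce'].
have eE : e = [set v; b; c] by rewrite -setUA -ebc setD1K.
have [x xe xH] : exists2 x, x \notin e & [set v; b; x] \notin H.
  case: (boolP [exists x, (x \notin e) && ([set v; b; x] \notin H)]).
    by case/existsP => x /andP[??]; exists x.
  rewrite negb_exists => /forallP allx; exfalso.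
  have sub : [set [set v; b; x] | x in ~: e] \subset [set g in H | v \in g].
    apply/subsetP => g /imsetP [x xe ->]; rewrite inE !inE eqxx /=.
    by have := allx x; rewrite negb_and !negbK andbT; move: xe; rewrite in_setC => /negbTE ->.
  have := subset_leq_card sub; rewrite card_in_imset.
    rewrite cardsCs setCK card_ord e3 => h.
    have := leq_trans h (dlow v ve); rewrite leq_subLR.
    by move=> h2; have := leq_trans n96 h2.
  move=> x y; rewrite !inE => xe2 ye2 Exy.
  have : x \in [set v; b; y] by rewrite -Exy !inE eqxx !orbT.
  rewrite !inE -orbA => /or3P[/eqP xv|/eqP xb|/eqP //].
    by move: xe2; rewrite xv ve.
  by move: xe2; rewrite xb be'.
have xc : x != c by apply/eqP => xc; move: xe; rewrite xc ce'.
have xv : x != v by apply/eqP => xv; move: xe; rewrite xv ve.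
have xb : x != b by apply/eqP => xb; move: xe; rewrite xb be'.
have e'3 : #|[set v; b; x]| = 3.
  rewrite -setUA cardsU1 cards2 !inE negb_or eq_sym bv eq_sym xv eq_sym xb.
  by [].
have := sat _ e'3 xH.
apply: (@key _ H v b c x noK) => //.
- by rewrite -eE.
- by rewrite eq_sym.
- by rewrite eq_sym.
- by apply: dlow.
- by apply: dlow; rewrite eE !inE eqxx ?orbT.
- by apply: dlow; rewrite eE !inE eqxx ?orbT.
Qed.
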